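(* Let $n>1$ be an integer and $t\in\mathbb Z/(n)$ invertible. Let $j_0,\dots,j_{n-1}\in\mathbb Z/(n)$ (indices read in $\mathbb Z/(n)$) satisfy $j_i=j_{-i}$ and $j_{t^s i}=t^s j_i-(t^s-1)j_0$ for all $i\in\mathbb Z/(n)$ and all $s\in\mathbb Z$, and suppose that for every nonzero $i\in\mathbb Z/(n)$ there is $k\in\mathbb Z/(n)$ with $j_{i+k}-j_k$ invertible. Define $\sigma_{(i,j)}(k,l)=(tk+j,\ t(l-j_{tk+j-i}))$ on $(\mathbb Z/(n))^2$ and $r((i,j),(k,l))=(\sigma_{(i,j)}(k,l),\sigma^{-1}_{\sigma_{(i,j)}(k,l)}(i,j))$. Then $((\mathbb Z/(n))^2,r)$ is an indecomposable and irretractable solution of the YBE. If moreover (i) $j_0-j_i$ is invertible for every nonzero $i\in\mathbb Z/(n)$, and (ii) $j_i-j_k$ is invertible whenever $j_i\ne j_k$, then $((\mathbb Z/(n))^2,r)$ is a simple solution of the YBE.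
   Context: A solution of the YBE is a pair $(X,r)$, $X$ nonempty, $r:X\times X\to X\times X$, $r(x,y)=(\sigma_x(y),\gamma_y(x))$, with $r^2=\mathrm{id}$, all $\sigma_x,\gamma_x$ bijective, and $r_{12}r_{23}r_{12}=r_{23}r_{12}r_{23}$ on $X^3$. Indecomposable: $\langle\sigma_x\rangle\le \mathrm{Sym}_X$ transitive on $X$. Irretractable: $\sigma_x\ne\sigma_y$ for $x\ne y$. A homomorphism of solutions $f:(X,r)\to(Y,s)$ (with $s(t,z)=(\sigma'_t(z),\gamma'_z(t))$) is a map with $f(\sigma_x(y))=\sigma'_{f(x)}(f(y))$; $(X,r)$ is simple if $|X|>1$ and every surjective homomorphism of solutions $f:(X,r)\to(Y,s)$ is bijective or has $|Y|=1$. *)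

(* Defs.v *)
From HB Require Import structures.
From mathcomp Require Import all_boot all_order all_fingroup all_algebra.
Set Implicit Arguments. Unset Strict Implicit. Unset Printing Implicit Defensive.
Import GRing.Theory.

Section YBE.
Variable X : Type.
Implicit Types (r : X * X -> X * X).

(* writing r(x,y) = (sigma_x(y), gamma_y(x)) *)
Definition ybe_sigma r (x y : X) : X := (r (x, y)).1.
Definition ybe_gamma r (y x : X) : X := (r (x, y)).2.

Definition r12 r (w : X * X * X) : X * X * X :=
  let: (x, y, z) := w in let: (a, b) := r (x, y) in (a, b, z).
Definition r23 r (w : X * X * X) : X * X * X :=
  let: (x, y, z) := w in let: (b, c) := r (y, z) in (x, b, c).

Definition is_solution r : Prop :=
  [/\ (forall p, r (r p) = p),
      (forall x, bijective (ybe_sigma r x)),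
      (forall y, bijective (ybe_gamma r y)) &
      (forall w, r12 r (r23 r (r12 r w)) = r23 r (r12 r (r23 r w)))].

Definition irretractable r : Prop :=
  forall x y : X, x <> y -> ybe_sigma r x <> ybe_sigma r y.

End YBE.

Definition sol_hom (X Y : Type) (r : X * X -> X * X) (s : Y * Y -> Y * Y) (f : X -> Y) : Prop :=
  forall x y, f (ybe_sigma r x y) = ybe_sigma s (f x) (f y).

Definition simple_solution (X : Type) (r : X * X -> X * X) : Prop :=
  (exists x y : X, x <> y) /\
  forall (Y : Type) (s : Y * Y -> Y * Y) (f : X -> Y),
    is_solution s -> sol_hom r s f -> (forall y, exists x, f x = y) ->
    bijective f \/ (exists y0 : Y, forall y, y = y0).

Section Finite.
Variable X : finType.

(* the permutation underlying f (f is bijective in all our uses) *)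
Definition fun_perm (f : X -> X) : {perm X} := @insubd _ _ {perm X} (1%g : {perm X}) [ffun x => f x].

Definition indecomposable (r : X * X -> X * X) : Prop :=
  [transitive <<[set fun_perm (ybe_sigma r x) | x : X]>>, on [set: X] | 'P].

Definition finv_map (f : X -> X) (z : X) : X := odflt z [pick y | f y == z].
End Finite.

Section Concrete.
Variables (n : nat) (t : 'Z_n) (J : 'Z_n -> 'Z_n).
Local Open Scope ring_scope.

Definition sigmaJ (x y : 'Z_n * 'Z_n) : 'Z_n * 'Z_n :=
  (t * y.1 + x.2, t * (y.2 - J (t * y.1 + x.2 - x.1))).

Definition rJ (p : ('Z_n * 'Z_n) * ('Z_n * 'Z_n)) : ('Z_n * 'Z_n) * ('Z_n * 'Z_n) :=
  let z := sigmaJ p.1 p.2 in (z, finv_map (sigmaJ z) p.1).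
End Concrete.

(* Main.v *)
Require Import Defs.
From HB Require Import structures.
From mathcomp Require Import all_boot all_order all_fingroup all_algebra.
From mathcomp Require Import ring.
From Stdlib Require Import FunctionalExtensionality Classical ClassicalEpsilon.
Set Implicit Arguments. Unset Strict Implicit. Unset Printing Implicit Defensive.
Import GRing.Theory.
Local Open Scope ring_scope.

Definition tauJ n (t : 'Z_n) (J : 'Z_n -> 'Z_n) (x y : 'Z_n * 'Z_n) : 'Z_n * 'Z_n :=
  (t^-1 * (y.1 - x.2), t^-1 * y.2 + J (y.1 - x.1)).

Lemma sigma_tau n (t : 'Z_n) J x y : t \is a GRing.unit ->
  sigmaJ t J x (tauJ t J x y) = y.
Proof.
move=> tu; case: x => i j; case: y => k l; rewrite /sigmaJ /tauJ /=.
have h1 : t * t^-1 = 1 by rewrite mulrV.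
have -> : t * (t^-1 * (k - j)) + j = k by ring: h1.
congr pair; rewrite addrK; ring: h1.
Qed.

Lemma tau_sigma n (t : 'Z_n) J x y : t \is a GRing.unit ->
  tauJ t J x (sigmaJ t J x y) = y.
Proof.
move=> tu; case: x => i j; case: y => k l; rewrite /sigmaJ /tauJ /=.
have h1 : t^-1 * t = 1 by rewrite mulVr.
have -> : t * k + j - j = t * k by ring.
congr pair; ring: h1.
Qed.

Lemma finv_sigma n (t : 'Z_n) J z w : t \is a GRing.unit ->
  finv_map (sigmaJ t J z) w = tauJ t J z w.
Proof.
move=> tu; rewrite /finv_map; case: pickP => [y /eqP Hy|H] /=.
  by rewrite -Hy tau_sigma.
by move: (H (tauJ t J z w)); rewrite sigma_tau // eqxx.
Qed.

Lemma rJE n (t : 'Z_n) J p : t \is a GRing.unit ->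
  rJ t J p = (sigmaJ t J p.1 p.2, tauJ t J (sigmaJ t J p.1 p.2) p.1).
Proof. by move=> tu; rewrite /rJ finv_sigma. Qed.

Lemma braid_gen (X : Type) (s tau : X -> X -> X) (r : X * X -> X * X) :
  (forall p, r p = (s p.1 p.2, tau (s p.1 p.2) p.1)) ->
  (forall x y, s x (tau x y) = y) -> (forall x y, tau x (s x y) = y) ->
  (forall x y z, s x (s y z) = s (s x y) (s (tau (s x y) x) z)) ->
  forall w, r12 r (r23 r (r12 r w)) = r23 r (r12 r (r23 r w)).
Proof.
move=> rE st ts H.
have H' : forall x u z, s x (s (tau x u) z) = s u (s (tau u x) z).
  by move=> x u z; rewrite H st.
have -> : r = fun p => (s p.1 p.2, tau (s p.1 p.2) p.1) by apply: functional_extensionality; exact rE.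
case=> [[x y] z]; rewrite /r12 /r23 /=.
set u := s x y. set v := tau u x. set p := s v z. set a := s y z.
set b := tau a y.
have E1 : s u p = s x a.
  by rewrite /p /v /a -H' /u ts.
rewrite E1.
set F := s x a. set c := tau F x.
have E2 : s F (s c b) = u.
  by rewrite /c -H' /F ts /b st.
have E2' : tau F u = s c b by rewrite -E2 ts.
rewrite E2'.
have E3 : s (s c b) (tau p v) = c.
  apply: (can_inj (ts F)); rewrite {2}/c st -E2' -H'.
  have E1' : F = s u p by rewrite E1.
  by rewrite E1' ts st /v st.
have E4 : tau (s c b) c = tau p v by rewrite -[X in tau _ X]E3 ts.
by rewrite E4.
Qed.
Lemma sigma_ident n (t : 'Z_n) J : t \is a GRing.unit ->
  (forall i, J (- i) = J i) ->
  (forall i, J (t * i) = t * J i - (t - 1) * J 0) ->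
  (forall i, J (t^-1 * i) = t^-1 * J i - (t^-1 - 1) * J 0) ->
  forall x y z, sigmaJ t J x (sigmaJ t J y z) =
    sigmaJ t J (sigmaJ t J x y) (sigmaJ t J (tauJ t J (sigmaJ t J x y) x) z).
Proof.
move=> tu Js Jt Jti [i j] [k l] [a b]; rewrite /sigmaJ /tauJ /=.
have h1 : t * t^-1 = 1 by rewrite mulrV.
have -> : J (i - (t*k+j)) = J (t*k+j-i) by rewrite -Js opprB.
set m := J (t*k+j-i).
congr pair; first by ring: h1.
have -> : t * a + (t^-1 * j + m) - t^-1 * (i - t * (l - m)) =
   t^-1 * (t*(t*a+l) + j - i) by ring: h1.
have -> : t * (t * a + (t^-1 * j + m)) + t * (l - m) - (t * k + j) =
   t * (t * a + l - k) by ring: h1.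
rewrite Jti Jt; ring: h1.
Qed.
Lemma fun_permE (X : finType) (f : X -> X) : injective f -> forall y, fun_perm f y = f y.
Proof.
move=> fi y; rewrite /fun_perm.
have P : injectiveb [ffun x => f x].
  by apply/injectiveP => a b; rewrite !ffunE; apply: fi.
rewrite [@fun_of_perm]unlock.
by rewrite insubdK ?ffunE.
Qed.

Lemma parity n (u w : 'Z_n) : (1 < n)%N -> u \is a GRing.unit -> w \is a GRing.unit ->
  exists p : 'Z_n, p + p = u + w.
Proof.
move=> n1 uu wu.
case: (boolP (odd n)) => on.
  have h2 : (2%:R : 'Z_n) \is a GRing.unit by rewrite unitZpE // coprimen2.
  exists ((u + w) / 2%:R).
  have h : 2%:R^-1 * (2%:R : 'Z_n) = 1 by rewrite mulVr.
  ring: h.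
have oddU : forall z : 'Z_n, z \is a GRing.unit -> odd (val z).
  move=> z zu; move: zu; rewrite -[z in z \is a _]natr_Zp unitZpE // => cz.
  apply/negPn/negP => ez.
  have : (2 %| gcdn n (val z))%N by rewrite dvdn_gcd !dvdn2 on ez.
  by rewrite (eqP cz).
exists ((val u + val w)./2)%:R.
rewrite -natrD addnn.
have : ~~ odd (val u + val w) by rewrite oddD (oddU _ uu) (oddU _ wu).
move=> ev; rewrite halfK (negbTE ev) subn0 natrD !natr_Zp //.
Qed.

Lemma sig_tau_gen n (t : 'Z_n) J i j i' j' k l : t \is a GRing.unit ->
  sigmaJ t J (i,j) (tauJ t J (i',j') (k,l)) =
  (k + (j - j'), l + t * (J (k - i') - J (k + (j - j') - i))).
Proof.
move=> tu; rewrite /sigmaJ /tauJ /=.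
have h1 : t * t^-1 = 1 by rewrite mulrV.
have -> : t * (t^-1 * (k - j')) + j = k + (j - j') by ring: h1.
congr pair; ring: h1.
Qed.

Definition gInv n (t : 'Z_n) (J : 'Z_n -> 'Z_n) (y x : 'Z_n * 'Z_n) : 'Z_n * 'Z_n :=
  let M := t * y.1 - t * (x.1 - x.2 + y.2) in
  (t * (x.2 - J M) + t * (x.1 - x.2 + y.2), t * (x.2 - J M)).

Lemma gamma_can n (t : 'Z_n) J y : t \is a GRing.unit ->
  (forall i, J (- i) = J i) ->
  cancel (fun x => tauJ t J (sigmaJ t J x y) x) (gInv t J y).
Proof.
move=> tu Js [i j]; case: y => k l; rewrite /gInv /sigmaJ /tauJ /=.
have h1 : t * t^-1 = 1 by rewrite mulrV.
have -> : J (i - (t*k+j)) = J (t*k+j-i) by rewrite -Js opprB.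
set m := J (t*k+j-i).
have -> : t * k - t * (t^-1 * (i - t * (l - m)) - (t^-1 * j + m) + l) = t * k + j - i
  by ring: h1.
rewrite -/m; congr pair; ring: h1.
Qed.

Theorem mainTheorem5 (n : nat) (t : 'Z_n) (J : 'Z_n -> 'Z_n) :
  (1 < n)%N ->
  t \is a GRing.unit ->
  (forall i : 'Z_n, J (- i) = J i) ->
  (forall (i : 'Z_n) (s : int), J (t ^ s * i) = t ^ s * J i - (t ^ s - 1) * J 0) ->
  (forall i : 'Z_n, i != 0 -> exists k : 'Z_n, J (i + k) - J k \is a GRing.unit) ->
  (is_solution (rJ t J) /\ indecomposable (rJ t J) /\ irretractable (rJ t J)) /\
  ((forall i : 'Z_n, i != 0 -> J 0 - J i \is a GRing.unit) ->
   (forall i k : 'Z_n, J i != J k -> J i - J k \is a GRing.unit) ->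
   simple_solution (rJ t J)).
Proof.
move=> n1 tu Js Jpow Jk.
have h1 : t * t^-1 = 1 by rewrite mulrV.
have Jt : forall i, J (t * i) = t * J i - (t - 1) * J 0.
  by move=> i; have := Jpow i 1; rewrite expr1z.
have Jti : forall i, J (t^-1 * i) = t^-1 * J i - (t^-1 - 1) * J 0.
  by move=> i; have := Jpow i (-1); rewrite exprN1.
have sinj : forall x, injective (sigmaJ t J x).
  by move=> x; apply: (can_inj (g := tauJ t J x)) => y; rewrite tau_sigma.
split; [split; [|split]|].
- split.
  + case=> x y; rewrite [rJ t J (x, y)]rJE // rJE //= sigma_tau // tau_sigma //.
  + move=> x; exists (tauJ t J x) => y; rewrite /ybe_sigma /rJ /=.
      exact: tau_sigma.
    exact: sigma_tau.
  + move=> y; apply: injF_bij; apply: (can_inj (g := gInv t J y)) => x.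
    rewrite /ybe_gamma rJE //=; exact: gamma_can.
  + apply: (braid_gen (s := sigmaJ t J) (tau := tauJ t J)).
    * by move=> p; rewrite rJE.
    * by move=> x y; rewrite sigma_tau.
    * by move=> x y; rewrite tau_sigma.
    * exact: sigma_ident.
- rewrite /indecomposable.
  set G := generated _.
  have genE : forall x y, fun_perm (sigmaJ t J x) y = sigmaJ t J x y.
    by move=> x y; rewrite fun_permE.
  have genG : forall x, fun_perm (sigmaJ t J x) \in G.
    by move=> x; apply: mem_gen; apply/imsetP; exists x.
  have genV : forall x y, ((fun_perm (sigmaJ t J x))^-1)%g y = tauJ t J x y.
    by move=> x y; rewrite -{1}(sigma_tau J x y tu) -genE permK.
  have orb : forall y, y \in orbit 'P G (0,0).
    case=> k l.
    have [k1 k1u] := Jk 1 (oner_neq0 _).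
    set T := ((fun_perm (sigmaJ t J (k - (1 + k1), 0)))^-1 *
              fun_perm (sigmaJ t J (k - k1, 0)))%g.
    have TG : T \in G by rewrite groupM ?groupV.
    set w := t * (J (1 + k1) - J k1).
    have wu : w \is a GRing.unit by rewrite unitrM tu.
    have TE : forall l, T (k, l) = (k, l + w).
      move=> l'; rewrite permM genV genE sig_tau_gen // subrr addr0.
      have -> : k - (k - (1 + k1)) = 1 + k1 by ring.
      by have -> : k - (k - k1) = k1 by ring.
    have TmE : forall m l, (T ^+ m)%g (k, l) = (k, l + w *+ m).
      elim=> [|m IH] l'; first by rewrite expg0 perm1 mulr0n addr0.
      by rewrite expgSr permM IH TE mulrSr addrA.
    set l0 := (sigmaJ t J (0, k) (0, 0)).2.
    have e0 : sigmaJ t J (0, k) (0, 0) = (k, l0).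
      by rewrite /l0 /sigmaJ /= mulr0 add0r.
    set m := val ((l - l0) * w^-1).
    apply/orbitP; exists (fun_perm (sigmaJ t J (0, k)) * T ^+ m)%g.
      by rewrite groupM ?groupX.
    rewrite /= apermE permM genE e0 TmE; congr pair.
    have hw : w * w^-1 = 1 by rewrite mulrV.
    rewrite -mulr_natr /m natr_Zp; ring: hw.
  apply/imsetP; exists (0,0); first by rewrite inE.
  by apply/setP => y; rewrite inE orb.
- move=> [i j] [i' j'] neq eqs.
  have e : forall y, sigmaJ t J (i, j) y = sigmaJ t J (i', j') y.
    by move=> y; exact: (congr1 (fun g => g y) eqs).
  have ejj : j = j'.
    by have := congr1 fst (e (0, 0)); rewrite /= mulr0 !add0r.
  subst j'.
  have nii : i - i' != 0.
    by rewrite subr_eq0; apply/eqP => eii; apply: neq; rewrite eii.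
  have [k1 k1u] := Jk _ nii.
  have := congr1 snd (e (t^-1 * (k1 + i - j), 0)); rewrite /= !sub0r.
  move/(mulrI tu)/oppr_inj.
  have -> : t * (t^-1 * (k1 + i - j)) + j - i = k1 by ring: h1.
  have -> : t * (t^-1 * (k1 + i - j)) + j - i' = i - i' + k1 by ring: h1.
  by move=> E; move: k1u; rewrite E subrr unitr0.
- move=> Hi Hii; split.
    by exists (0,0), (1,0); case=> /esym/eqP; rewrite oner_eq0.
  move=> Y s f Hs Hh Hsurj.
  have C1 : forall x x' y, f x = f x' -> f (sigmaJ t J x y) = f (sigmaJ t J x' y).
    move=> x x' y e.
    have E1 := Hh x y; have E2 := Hh x' y.
    rewrite /ybe_sigma /rJ /= in E1 E2.
    by rewrite E1 E2 e.
  have C2 : forall z y y', f y = f y' -> f (sigmaJ t J z y) = f (sigmaJ t J z y').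
    move=> z y y' e.
    have E1 := Hh z y; have E2 := Hh z y'.
    rewrite /ybe_sigma /rJ /= in E1 E2.
    by rewrite E1 E2 e.
  have step : forall i j i' j', f (i, j) = f (i', j') -> forall k l,
      f (k, l) = f (k + (j - j'), l + t * (J (k - i') - J (k + (j - j') - i))).
    move=> i j i' j' e k l.
    rewrite -(sig_tau_gen J i j i' j' k l tu) -{1}(sigma_tau J (i', j') (k, l) tu).
    by apply: C1.
  have caseA : forall a a' b, a != a' -> f (a, b) = f (a', b) -> forall p q, f p = f q.
    move=> a a' b neq e.
    have S := step _ _ _ _ e.
    have naa : a - a' != 0 by rewrite subr_eq0.
    have [k1 k1u] := Jk _ naa.
    set k := a + k1.
    set w := t * (J (a - a' + k1) - J k1).
    have wu : w \is a GRing.unit by rewrite unitrM tu.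
    have col : forall l, f (k, l) = f (k, l + w).
      move=> l; rewrite S subrr addr0.
      have -> : k - a' = a - a' + k1 by rewrite /k; ring.
      by have -> : k - a = k1 by rewrite /k; ring.
    have colm : forall m l, f (k, l) = f (k, l + w *+ m).
      elim=> [|m IH] l; first by rewrite mulr0n addr0.
      by rewrite IH col mulrSr addrA.
    have colall : forall l l', f (k, l) = f (k, l').
      move=> l l'; rewrite (colm (val ((l' - l) * w^-1)) l); congr (f (_, _)).
      have hw : w * w^-1 = 1 by rewrite mulrV.
      rewrite -mulr_natr natr_Zp; ring: hw.
    have cols : forall K L L', f (K, L) = f (K, L').
      move=> K L L'.
      set z : 'Z_n * 'Z_n := (0, K - t * k).
      have et : forall L, tauJ t J z (K, L) = (k, (tauJ t J z (K, L)).2).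
        by move=> L0; rewrite /tauJ /=; congr pair; ring: h1.
      rewrite -(sigma_tau J z (K, L) tu) -(sigma_tau J z (K, L') tu) et [tauJ t J z (K, L')]et.
      by apply: C2; apply: colall.
    have all : forall K L K' L', f (K, L) = f (K', L').
      move=> K L K' L'.
      have e1 := C1 (0, K) (0, K') (0, 0) (cols 0 K K').
      rewrite /sigmaJ /= !mulr0 !add0r in e1.
      exact: etrans (etrans (cols K L _) e1) (cols K' _ L').
    by case=> ? ?; case=> ? ?; apply: all.
  have L3 : forall i j i' j' p, j != j' -> p + p = (i - j) - (i' - j') ->
      f (i, j) = f (i', j') -> forall p q, f p = f q.
    move=> i j i' j' p njj hp e.
    have S := step _ _ _ _ e (i' + p) 0.
    have E1 : i' + p - i' = p by ring.
    have E2 : i' + p + (j - j') - i = - p.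
      apply/eqP; rewrite -subr_eq0.
      have -> : i' + p + (j - j') - i - - p = (p + p) - ((i - j) - (i' - j')) by ring.
      by rewrite hp subrr.
    rewrite E1 E2 Js subrr mulr0 addr0 in S.
    apply: (caseA _ _ _ _ S).
    apply/eqP => E; move/eqP: njj; apply.
    apply/eqP; rewrite -subr_eq0; apply/eqP.
    by apply: (addrI (i' + p)); rewrite addr0 -E.
  case: (classic (exists x x', x <> x' /\ f x = f x')) => [[[i j] [[i' j'] [neq e]]]|H].
  + right; exists (f (0, 0)) => y.
    have total : forall p q, f p = f q.
      case: (eqVneq j j') => [ejj | njj].
        subst j'; apply: (caseA i i' j) => //.
        by apply/eqP => eii; apply: neq; rewrite eii.
      set g0 := (i - j) - (i' - j').
      case: (eqVneq g0 0) => [g00 | g0n].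
        by apply: (L3 i j i' j' 0) => //; rewrite addr0 -[RHS]/g0 g00.
      set e1 := t * (J 0 - J g0).
      have e1u : e1 \is a GRing.unit by rewrite unitrM tu Hi.
      have P1 : f (i', 0) = f (i' + (j - j'), e1).
        rewrite (step _ _ _ _ e i' 0) subrr add0r.
        have -> : i' + (j - j') - i = - g0 by rewrite /g0; ring.
        by rewrite Js.
      have ne1 : (0 : 'Z_n) != e1.
        by apply/eqP => E; move: e1u; rewrite -E unitr0.
      set g1 := (i' - 0) - (i' + (j - j') - e1).
      case: (eqVneq g1 0) => [g10 | g1n].
        by apply: (L3 _ _ _ _ 0 ne1 _ P1); rewrite addr0 -[RHS]/g1 g10.
      set e2 := t * (J 0 - J g1).
      have e2u : e2 \is a GRing.unit by rewrite unitrM tu Hi.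
      have P2 : f (i' + (j - j'), 0) = f (i' + (j - j') - e1, e2).
        rewrite (step _ _ _ _ P1 (i' + (j - j')) 0) subrr !add0r.
        have -> : i' + (j - j') - e1 - i' = - g1 by rewrite /g1; ring.
        by rewrite Js.
      have ne2 : (0 : 'Z_n) != e2.
        by apply/eqP => E; move: e2u; rewrite -E unitr0.
      have [p hp] := parity n1 e1u e2u.
      apply: (L3 _ _ _ _ p ne2 _ P2).
      rewrite hp; ring.
    by case: (Hsurj y) => x <-; apply: total.
  + left.
    have fi : injective f.
      move=> a b e; case: (classic (a = b)) => // nab.
      by exfalso; apply: H; exists a, b.
    pose g := fun y => proj1_sig (constructive_indefinite_description _ (Hsurj y)).
    have gK : forall y, f (g y) = y.
      by move=> y; rewrite /g; case: constructive_indefinite_description.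
    exists g => [x|y]; last exact: gK.
    by apply: fi; rewrite gK.
Qed.
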